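(* Let $n\geq1$ and $0\leq p\leq 1$. Then: (i) for $1<k<n$, $$\Pr_p(PCE_k)=\sum_{r=k}^n\binom{r}{k}(-1)^{r-k}\binom{n}{r}2^r\bigl(p^{2^n-2^{n-r}}-p^{2^n}\bigr),\quad \Pr_p(NCE_k)=\sum_{r=k}^n\binom{r}{k}(-1)^{r-k}\binom{n}{r}2^r\bigl((1-p)^{2^n-2^{n-r}}-(1-p)^{2^n}\bigr);$$ (ii) if $n>1$, $$\Pr_p(PCE_n)=2^n\bigl(p^{2^n-1}-p^{2^n}\bigr)+p^{2^n},\qquad \Pr_p(NCE_n)=2^n\bigl((1-p)^{2^n-1}-(1-p)^{2^n}\bigr)+(1-p)^{2^n};$$ (iii) if $1<n$, $$\Pr_p(PCE_1)=2n\bigl(p^{2^{n-1}}-p^{2^n}-p^{2^{n-1}}(1-p)^{2^{n-1}}\bigr)+\sum_{r=2}^n r(-1)^{r-1}\binom{n}{r}2^r\bigl(p^{2^n-2^{n-r}}-p^{2^n}\bigr),$$ $$\Pr_p(NCE_1)=2n\bigl((1-p)^{2^{n-1}}-(1-p)^{2^n}-p^{2^{n-1}}(1-p)^{2^{n-1}}\bigr)+\sum_{r=2}^n r(-1)^{r-1}\binom{n}{r}2^r\bigl((1-p)^{2^n-2^{n-r}}-(1-p)^{2^n}\bigr).$$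
   Context: Boolean functions on $n$ variables are maps $f:\{0,1\}^n\to\{0,1\}$, variables indexed by $[n]=\{0,\dots,n-1\}$. The bias-$p$ probability measure on Boolean functions is $\Pr_p(f)=p^{|f^{-1}\{1\}|}(1-p)^{|f^{-1}\{0\}|}$ (with $0^0=1$). $f$ is positively canalizing for variable $i$ if there is $s\in\{0,1\}$ with $f(x)=1$ for all $x$ with $x_i=s$; negatively canalizing for variable $i$ if there is $s\in\{0,1\}$ with $f(x)=0$ for all $x$ with $x_i=s$. $f$ is positively (resp. negatively) canalizing if it is so for some variable. $PCE_k$ is the set of Boolean functions that are positively but not negatively canalizing and are positively canalizing for exactly $k$ variables; $NCE_k$ is the set of Boolean functions that are negatively but not positively canalizing and are negatively canalizing for exactly $k$ variables. *)

(* Defs.v *)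
From mathcomp Require Import all_boot all_order all_algebra.
Set Implicit Arguments. Unset Strict Implicit. Unset Printing Implicit Defensive.
Import Order.TTheory GRing.Theory Num.Theory.

Definition input (n : nat) := {ffun 'I_n -> bool}.
Definition boolfun (n : nat) := {ffun input n -> bool}.

Definition pos_can_var n (f : boolfun n) (i : 'I_n) : bool :=
  [exists s : bool, [forall x : input n, (x i == s) ==> f x]].
Definition neg_can_var n (f : boolfun n) (i : 'I_n) : bool :=
  [exists s : bool, [forall x : input n, (x i == s) ==> ~~ f x]].

Definition pos_can n (f : boolfun n) : bool := [exists i, pos_can_var f i].
Definition neg_can n (f : boolfun n) : bool := [exists i, neg_can_var f i].

Definition PCE (n k : nat) : {set boolfun n} :=
  [set f | [&& pos_can f, ~~ neg_can f & #|[set i | pos_can_var f i]| == k]].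
Definition NCE (n k : nat) : {set boolfun n} :=
  [set f | [&& neg_can f, ~~ pos_can f & #|[set i | neg_can_var f i]| == k]].

Local Open Scope ring_scope.

(* bias-p probability of a set of Boolean functions (x ^+ 0 = 1, so 0^0 = 1) *)
Definition Prp (R : nzRingType) (n : nat) (p : R) (A : {set boolfun n}) : R :=
  \sum_(f in A) p ^+ #|[set x | f x]| * (1 - p) ^+ #|[set x | ~~ f x]|.

(* Main.v *)
Require Import Defs.
From mathcomp Require Import all_boot all_order all_algebra.
From mathcomp Require Import ring lra zify.
Import Order.TTheory GRing.Theory Num.Theory.
Local Open Scope ring_scope.

Section Main.
Variable R : realFieldType.
Variable n : nat.
Implicit Types (f : boolfun n) (x : input n) (p : R).

Definition w p f : R := \prod_(x : input n) (if f x then p else 1 - p).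

Lemma wE p f : p ^+ #|[set x | f x]| * (1 - p) ^+ #|[set x | ~~ f x]| = w p f.
Proof.
rewrite /w (bigID (fun x => f x)) /=.
rewrite -!prodr_const; congr (_ * _); apply: eq_big => x; rewrite ?inE //.
- by move=> ->.
- by move=> /negbTE ->.
Qed.

Lemma card_input : #|{: input n}| = (2 ^ n)%N.
Proof. by rewrite card_ffun card_bool card_ord. Qed.

Lemma prod_bool (I : finType) (A : {pred I}) (b : I -> bool) :
  \prod_(i in A) ((b i : nat)%:R : R) = ([forall i in A, b i] : nat)%:R.
Proof.
case: (boolP [forall i in A, b i]) => [/forall_inP h | /forall_inPn [i iA nbi]].
  by rewrite big1 // => i /h ->.
by rewrite (bigD1 i) //= (negbTE nbi) mul0r.
Qed.

Lemma sum_sup p (A : {set input n}) :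
  \sum_(f : boolfun n | A \subset [set x | f x]) w p f = p ^+ #|A|.
Proof.
pose F (x : input n) (b : bool) : R := if b then p else if x \in A then 0 else 1 - p.
have -> : p ^+ #|A| = \prod_(x : input n) \sum_(b : bool) F x b.
  rewrite [RHS](bigID (mem A)) /= [X in _ = _ * X]big1 ?mulr1.
    by rewrite -prodr_const; apply: eq_bigr => x xA; rewrite big_bool /F /= xA addr0.
  by move=> x /negbTE xA; rewrite big_bool /F /= xA addrC subrK.
rewrite bigA_distr_bigA big_mkcond; apply: eq_bigr => g _.
case: ifP => sub.
  apply: eq_bigr => x _; rewrite /F; case gx: (g x) => //; case: ifPn => // xA.
  by move/subsetP: sub => /(_ x xA); rewrite inE gx.
move/negbT: sub => /subsetPn [x xA]; rewrite inE => /negbTE gx.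
by rewrite (bigD1 x) //= /F gx xA mul0r.
Qed.

Lemma card_fix (U : {set 'I_n}) (t : 'I_n -> bool) :
  #|[set x : input n | [forall i in U, x i == t i]]| = (2 ^ (n - #|U|))%N.
Proof.
rewrite -sum1_card big_mkcond /=.
pose G (i : 'I_n) (b : bool) : nat := if i \in U then (b == t i : nat) else 1%N.
transitivity (\sum_(x : input n) \prod_(i : 'I_n) G i (x i))%N.
  apply: eq_bigr => x _; rewrite inE.
  case: (boolP [forall i in U, x i == t i]) => [/forall_inP h | /forall_inPn [i iU ni]].
    by rewrite big1 // => i _; rewrite /G; case: ifP => // /h ->.
  by rewrite (bigD1 i) //= /G iU (negbTE ni).
rewrite -bigA_distr_bigA /=.
transitivity (\prod_(i in ~: U) 2)%N.
  rewrite [RHS]big_mkcond; apply: eq_bigr => i _; rewrite big_bool /G inE.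
  by case: (i \in U) => //=; case: (t i).
rewrite prod_nat_const; congr (expn _ _).
have := cardsC U; rewrite card_ord; move: #|U| #|~: U| => a b e; by rewrite -e addKn.
Qed.

Definition one : boolfun n := [ffun _ => true].
Definition V f := [set i | pos_can_var f i].
Definition fs f := [set x | f x].
Definition Hs (i : 'I_n) (b : bool) : {set input n} := [set x : input n | x i == b].

Lemma ex_bool (Q : bool -> bool) : [exists s, Q s] = Q true || Q false.
Proof.
by apply/existsP/orP => [[[] h]|[h|h]]; [left|right|exists true|exists false].
Qed.

Lemma pcvE f i : pos_can_var f i = [exists s, Hs i s \subset fs f].
Proof.
apply: eq_existsb => s; apply/forallP/subsetP => [h x | h x].
  by rewrite inE => /eqP xs; rewrite inE; apply: (implyP (h x)); rewrite xs.
by apply/implyP => xs; have := h x; rewrite !inE => /(_ xs).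
Qed.

Lemma not_both f i : f != one -> ~~ ((Hs i true \subset fs f) && (Hs i false \subset fs f)).
Proof.
move=> /eqP fn; apply/negP => /andP[/subsetP h1 /subsetP h0]; apply: fn; apply/ffunP => x.
rewrite ffunE; case e: (x i).
  by have := h1 x; rewrite !inE e => /(_ isT).
by have := h0 x; rewrite !inE e => /(_ isT).
Qed.

Definition As (U : {set 'I_n}) (s : {ffun 'I_n -> bool}) : {set input n} :=
  [set x : input n | [exists i in U, x i == s i]].

Lemma card_As U s : #|As U s| = (2 ^ n - 2 ^ (n - #|U|))%N.
Proof.
have e : ~: As U s = [set x : input n | [forall i in U, x i == ~~ s i]].
  apply/setP => x; rewrite !inE negb_exists_in; apply: eq_forallb => i.
  by case: (i \in U) => //=; case: (x i); case: (s i).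
have := cardsC (As U s); rewrite e card_fix card_input => <-.
by rewrite addnK.
Qed.

Lemma gU p (U : {set 'I_n}) :
  \sum_(f | U \subset V f) w p f =
  2 ^+ #|U| * (p ^+ (2^n - 2^(n - #|U|)) - p ^+ (2^n)) + p ^+ (2^n).
Proof.
pose Pf f : R := \prod_(i in U) \sum_(b : bool) ((Hs i b \subset fs f : nat)%:R).
have w1 : w p one = p ^+ (2^n).
  rewrite /w (eq_bigr (fun _ => p)); last by move=> x _; rewrite ffunE.
  by rewrite -card_input -prodr_const.
have P1 : Pf one = 2 ^+ #|U|.
  rewrite /Pf -prodr_const; apply: eq_bigr => i _; rewrite big_bool.
  have h b : Hs i b \subset fs one by apply/subsetP => x; rewrite !inE ffunE.
  by rewrite !h.
have Pn f : f != one -> Pf f = (U \subset V f : nat)%:R.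
  move=> fn.
  have -> : U \subset V f = [forall i in U, i \in V f].
    by apply/subsetP/forall_inP.
  rewrite -prod_bool; apply: eq_bigr => i _.
  rewrite big_bool inE pcvE ex_bool; have := @not_both f i fn.
  by case: (Hs i true \subset fs f); case: (Hs i false \subset fs f) => //= _; rewrite ?addr0 ?add0r.
have PfE f : Pf f = \sum_(s in pffun_on false (mem U) predT) ((As U s \subset fs f : nat)%:R).
  rewrite /Pf (big_distr_big false (fun i => i \in U) xpredT) /=.
  apply: eq_bigr => s _; rewrite prod_bool; congr ((nat_of_bool _)%:R).
  apply/forall_inP/subsetP => [h x | h i iU].
    by rewrite inE => /exists_inP [i iU /eqP xi]; apply: (subsetP (h i iU)); rewrite inE xi.
  by apply/subsetP => x; rewrite inE => /eqP xi; apply: h; rewrite inE; apply/exists_inP; exists i; rewrite ?xi.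
have T : \sum_f w p f * Pf f = 2 ^+ #|U| * p ^+ (2^n - 2^(n - #|U|)).
  under eq_bigr do rewrite PfE big_distrr.
  rewrite exchange_big /=.
  rewrite (eq_bigr (fun _ => p ^+ (2^n - 2^(n - #|U|)))); last first.
    move=> s _; rewrite -(card_As U s) -sum_sup [RHS]big_mkcond; apply: eq_bigr => f _.
    by case: ifP => _; rewrite ?mulr1 ?mulr0.
  by rewrite sumr_const card_pffun_on card_bool -[in LHS]mulr_natl natrX.
have U1 : U \subset V one.
  by apply/subsetP => i _; rewrite inE pcvE ex_bool; apply/orP; left; apply/subsetP => x; rewrite !inE ffunE.
move: T; rewrite (bigD1 one) //= P1 w1 => T.
rewrite big_mkcond (bigD1 one) //= U1 w1.
have -> : \sum_(f | f != one) (if U \subset V f then w p f else 0) =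
   \sum_(f | f != one) w p f * Pf f.
  by apply: eq_bigr => f fn; rewrite Pn //; case: ifP; rewrite ?mulr1 ?mulr0.
have -> : \sum_(f | f != one) w p f * Pf f = 2 ^+ #|U| * p ^+ (2^n - 2^(n - #|U|)) - p ^+ (2^n) * 2 ^+ #|U|.
  by rewrite -T addrC addrK.
by rewrite mulrBr; ring.
Qed.

Lemma sum_card (T : finType) (A : {set T}) (h : nat -> R) :
  \sum_(U : {set T} | U \subset A) h #|U| = \sum_(r < #|A|.+1) ('C(#|A|, r))%:R * h r.
Proof.
rewrite (partition_big (fun U : {set T} => (inord #|U| : 'I_#|A|.+1)) xpredT) //=.
apply: eq_bigr => r _.
have -> : \sum_(U : {set T} | (U \subset A) && (inord #|U| == r)) h #|U| =
          \sum_(U in [set U : {set T} | U \subset A & #|U| == r]) h r.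
  apply: eq_big => U.
    rewrite !inE; case sUA: (U \subset A) => //=.
    have lt : (#|U| < #|A|.+1)%N by rewrite ltnS subset_leq_card.
    apply/eqP/eqP => [<- | e]; first by rewrite inordK.
    by apply: val_inj; rewrite /= inordK // e.
  by move=> /andP[sUA /eqP <-]; rewrite inordK // ltnS subset_leq_card.
by rewrite sumr_const cards_draws mulr_natl.
Qed.

Lemma binmul m r k : (k <= r)%N -> (r <= m)%N ->
  ('C(m, r) * 'C(r, k) = 'C(m, k) * 'C(m - k, r - k))%N.
Proof.
move=> kr rm.
have km : (k <= m)%N by apply: leq_trans rm.
apply/eqP; rewrite -(@eqn_pmul2r (k`! * (r - k)`! * (m - r)`!)); last by rewrite !muln_gt0 !fact_gt0.
have e1 := bin_fact rm.
have e2 := bin_fact kr.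
have e3 := bin_fact km.
have e4 : (r - k <= m - k)%N by apply: leq_sub2r.
have e5 := bin_fact e4.
have e6 : (m - k - (r - k) = m - r)%N by lia.
rewrite e6 in e5.
apply/eqP.
transitivity ('C(m, r) * ('C(r, k) * (k`! * (r - k)`!)) * (m - r)`!)%N; first by ring.
rewrite e2 -mulnA e1.
transitivity ('C(m, k) * (k`! * ('C(m - k, r - k) * ((r - k)`! * (m - r)`!))))%N; last by ring.
by rewrite e5 e3.
Qed.

Lemma alt_sum m k : \sum_(r < m.+1) ('C(m, r))%:R * (('C(r, k))%:R * (-1) ^+ (r - k))
   = ((m == k) : nat)%:R :> R.
Proof.
case: (ltnP m k) => [mk | km].
  rewrite big1 ?ltn_eqF // => r _.
  have := ltn_ord r; rewrite ltnS => rm.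
  by rewrite (bin_small (leq_ltn_trans rm mk)) mul0r mulr0.
rewrite -(big_mkord xpredT (fun r => ('C(m, r))%:R * (('C(r, k))%:R * (-1) ^+ (r - k)) : R)).
rewrite (@big_cat_nat _ _ _ k) /=; [|exact: leq0n|exact: leqW].
rewrite big_nat big1 ?add0r; last first.
  by move=> r /andP[_ rk]; rewrite (bin_small rk) mul0r mulr0.
change (\sum_(0 + k <= r < m.+1) ('C(m, r))%:R * (('C(r, k))%:R * (-1) ^+ (r - k)) = ((m == k) : nat)%:R :> R).
rewrite big_addn.
have e : forall j, (0 <= j < m.+1 - k)%N ->
   ('C(m, j + k))%:R * (('C(j + k, k))%:R * (-1) ^+ (j + k - k)) =
   ('C(m, k))%:R * (('C(m - k, j))%:R * (-1) ^+ j) :> R.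
  move=> j /andP[_ jm].
  rewrite mulrA -natrM binmul ?leq_addl //; last by lia.
  by rewrite natrM addnK -mulrA.
rewrite big_nat (eq_bigr _ (fun j _ => e j _)) //= -big_nat.
rewrite -big_distrr /= subSn // big_mkord.
have -> : \sum_(i < (m - k).+1) ('C(m - k, i))%:R * (-1 : R) ^+ i = ((m - k == 0)%N : nat)%:R.
  transitivity ((1 + (-1:R)) ^+ (m - k)); last by rewrite subrr expr0n.
  rewrite exprDn; apply: eq_bigr => i _.
  by rewrite expr1n mul1r mulr_natl.
rewrite subn_eq0.
case: (leqP m k) => [mk | mk].
  have -> : m = k by apply/eqP; rewrite eqn_leq mk km.
  by rewrite eqxx binn mul1r.
by rewrite gtn_eqF // mulr0.
Qed.

Lemma sumV p k :
  \sum_(f | #|V f| == k) w p f =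
  \sum_(r < n.+1) ('C(n, r))%:R * ((('C(r, k))%:R * (-1) ^+ (r - k)) *
      (2 ^+ r * (p ^+ (2^n - 2^(n - r)) - p ^+ (2^n)) + p ^+ (2^n))).
Proof.
pose c r : R := ('C(r, k))%:R * (-1) ^+ (r - k).
transitivity (\sum_f w p f * \sum_(U : {set 'I_n} | U \subset V f) c #|U|).
  rewrite big_mkcond; apply: eq_bigr => f _.
  by rewrite sum_card alt_sum; case: eqP => _; rewrite ?mulr1 ?mulr0.
transitivity (\sum_(U : {set 'I_n}) c #|U| * \sum_(f | U \subset V f) w p f).
  under eq_bigr do rewrite big_distrr /=.
  rewrite (exchange_big_dep xpredT) //=; apply: eq_bigr => U _.
  by rewrite big_distrr; apply: eq_bigr => f _; rewrite mulrC.
under eq_bigr do rewrite gU.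
rewrite (eq_bigl (fun U : {set 'I_n} => U \subset [set: 'I_n])); last by move=> U; rewrite subsetT.
by rewrite (@sum_card _ [set: 'I_n] (fun r => c r * (2 ^+ r * (p ^+ (2^n - 2^(n - r)) - p ^+ (2^n)) + p ^+ (2^n)))) cardsT card_ord.
Qed.

Definition ind (i : 'I_n) (s : bool) : boolfun n := [ffun x : input n => x i == s].

Lemma V_ind i s : V (ind i s) = [set i].
Proof.
apply/setP => j; rewrite !inE pcvE; apply/idP/eqP => [/existsP [t /subsetP h] | ->].
  apply/eqP; apply/negPn/negP => ji.
  pose x : input n := [ffun l => if l == j then t else ~~ s].
  have ij : i != j by rewrite eq_sym.
  have := h x; rewrite !inE !ffunE eqxx (negbTE ij) => /(_ (eqxx t)).
  by case: (s).
by apply/existsP; exists s; apply/subsetP => x; rewrite !inE ffunE.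
Qed.

Lemma posE f : pos_can f = (0 < #|V f|)%N.
Proof.
rewrite card_gt0; apply/existsP/set0Pn => [[i h]|[i h]]; exists i; by rewrite ?inE in h *.
Qed.

Lemma D_char f : (pos_can f && neg_can f) = [exists ij : 'I_n * bool, f == ind ij.1 ij.2].
Proof.
apply/andP/existsP => [[/existsP[i /existsP[s /forallP hp]] /existsP[j /existsP[t /forallP hn]]] | [[i s] /eqP ->]].
  have ij : i = j.
    apply/eqP/negP => /negP ij.
    pose y : input n := [ffun l => if l == i then s else t].
    have ji : j != i by rewrite eq_sym.
    have := hp y; have := hn y; rewrite !ffunE eqxx (negbTE ji) eqxx /=.
    by move=> /negbTE ->; rewrite eqxx.
  subst j.
  have ts : t = ~~ s.
    case: (boolP (t == s)) => [/eqP ets | ]; last by case: (s); case: (t).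
    pose y : input n := [ffun l => s].
    have := hp y; have := hn y; rewrite !ffunE ets eqxx /=.
    by move=> /negbTE ->.
  exists (i, s); apply/eqP/ffunP => x; rewrite ffunE /=.
  case e: (x i == s); first by have := hp x; rewrite e.
  have := hn x; rewrite ts.
  have -> : x i == ~~ s by move: e; case: (x i); case: (s).
  by move=> /= /negbTE.
split; apply/existsP; exists i.
  by apply/existsP; exists s; apply/forallP => x; rewrite ffunE /=; apply/implyP.
apply/existsP; exists (~~ s); apply/forallP => x; rewrite ffunE /=; apply/implyP.
by case: (x i); case: s.
Qed.

Lemma forall1 (x : input n) i (t : 'I_n -> bool) :
  [forall j in [set i], x j == t j] = (x i == t i).
Proof.
apply/forall_inP/idP => [h | h j]; first by apply: h; rewrite inE.
by rewrite inE => /eqP ->.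
Qed.

Lemma w_ind p i s : w p (ind i s) = p ^+ (2 ^ n.-1) * (1 - p) ^+ (2 ^ n.-1).
Proof.
rewrite -wE.
have -> : #|[set x | ind i s x]| = (2 ^ n.-1)%N.
  rewrite (_ : n.-1 = n - #|[set i]|)%N; last by rewrite cards1 subn1.
  rewrite -(card_fix [set i] (fun _ => s)).
  by apply: eq_card => x; rewrite !inE ffunE forall1.
have -> : #|[set x | ~~ ind i s x]| = (2 ^ n.-1)%N.
  rewrite (_ : n.-1 = n - #|[set i]|)%N; last by rewrite cards1 subn1.
  rewrite -(card_fix [set i] (fun _ => ~~ s)).
  by apply: eq_card => x; rewrite !inE ffunE forall1; case: (x i); case: s.
by [].
Qed.

Lemma ind_inj : injective (fun ij : 'I_n * bool => ind ij.1 ij.2).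
Proof.
move=> [i s] [j t] /= e.
have ij : i = j by apply/set1_inj; rewrite -(V_ind i s) -(V_ind j t) e.
subst j; congr (_, _).
have := congr1 (fun g : boolfun n => g [ffun _ => s]) e; rewrite /= !ffunE eqxx.
by move/esym/eqP.
Qed.

Lemma pce_split p k : (0 < k)%N ->
  Prp p (PCE n k) = \sum_(f | #|V f| == k) w p f
     - ((k == 1%N) : nat)%:R * ((n.*2)%:R * (p ^+ (2 ^ n.-1) * (1 - p) ^+ (2 ^ n.-1))).
Proof.
move=> k0.
rewrite (bigID (fun f => neg_can f)) /=.
have -> : Prp p (PCE n k) = \sum_(f | (#|V f| == k) && ~~ neg_can f) w p f.
  rewrite /Prp; apply: eq_big => [f|f _]; last exact: wE.
  rewrite inE posE -/(V f); case: eqP => [-> | ] /=; last by rewrite !andbF.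
  by rewrite k0 andbT.
have -> : \sum_(f | (#|V f| == k) && neg_can f) w p f =
   ((k == 1%N) : nat)%:R * ((n.*2)%:R * (p ^+ (2 ^ n.-1) * (1 - p) ^+ (2 ^ n.-1))).
  case: (eqVneq k 1%N) => [-> | k1] /=.
    pose h := fun ij : 'I_n * bool => ind ij.1 ij.2.
    rewrite mul1r (eq_bigl (fun f => f \in h @: [set: 'I_n * bool])); last first.
      move=> f; apply/andP/imsetP => [[c1 nc] | [[i s] _ ->]].
        have : pos_can f && neg_can f by rewrite nc posE (eqP c1).
        by rewrite D_char => /existsP [ij /eqP ->]; exists ij; rewrite ?inE.
      split; first by rewrite /h /= V_ind cards1.
      by have := D_char (ind i s); rewrite /= => e; move: (e); rewrite [X in _ = X](_ : _ = true) ?andbT //; [case/andP | apply/existsP; exists (i, s)].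
    rewrite big_imset /=; last by move=> x y _ _; apply: ind_inj.
    under eq_bigr do rewrite /h w_ind.
    by rewrite sumr_const cardsT card_prod card_ord card_bool muln2 mulr_natl.
  rewrite mul0r big1 // => f /andP[/eqP c1 nc].
  have : pos_can f && neg_can f by rewrite nc posE c1 k0.
  rewrite D_char => /existsP [[i s] /eqP fe].
  by move: c1; rewrite fe V_ind cards1 => c1; rewrite -c1 eqxx in k1.
by rewrite addrC addrK.
Qed.

Definition negf f : boolfun n := [ffun x => ~~ f x].

Lemma nce_pce p k : Prp p (NCE n k) = Prp (1 - p) (PCE n k).
Proof.
have nK : involutive negf by move=> f; apply/ffunP => x; rewrite !ffunE negbK.
have e1 f i : pos_can_var (negf f) i = neg_can_var f i.
  by apply: eq_existsb => s; apply: eq_forallb => x; rewrite ffunE.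
have e2 f i : neg_can_var (negf f) i = pos_can_var f i.
  by apply: eq_existsb => s; apply: eq_forallb => x; rewrite ffunE negbK.
rewrite /Prp [RHS](reindex_inj (can_inj nK)) /=.
apply: eq_big => [f | f _].
  rewrite !inE /pos_can /neg_can.
  rewrite (eq_existsb (e1 f)) (eq_existsb (e2 f)).
  have -> : [set i | pos_can_var (negf f) i] = [set i | neg_can_var f i].
    by apply/setP => i; rewrite !inE e1.
  by rewrite andbCA.
have -> : 1 - (1 - p) = p by ring.
have -> : #|[set x | negf f x]| = #|[set x | ~~ f x]|.
  by apply: eq_card => x; rewrite !inE ffunE.
have -> : #|[set x | ~~ negf f x]| = #|[set x | f x]|.
  by apply: eq_card => x; rewrite !inE ffunE negbK.
by rewrite mulrC.
Qed.

Definition Tm p k r : R := ('C(r, k))%:R * (-1) ^+ (r - k) * ('C(n, r))%:R * 2 ^+ r *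
          (p ^+ (2 ^ n - 2 ^ (n - r)) - p ^+ (2 ^ n)).

Lemma CL p k : (0 < k)%N -> Prp p (PCE n k) =
  \sum_(r < n.+1) Tm p k r + ((n == k) : nat)%:R * p ^+ (2 ^ n)
  - ((k == 1%N) : nat)%:R * ((n.*2)%:R * (p ^+ (2 ^ n.-1) * (1 - p) ^+ (2 ^ n.-1))).
Proof.
move=> k0; rewrite pce_split // sumV.
congr (_ - _).
rewrite (eq_bigr (fun r : 'I_n.+1 => Tm p k r + p ^+ (2 ^ n) * (('C(n, r))%:R * (('C(r, k))%:R * (-1) ^+ (r - k))))); last first.
  by move=> r _; rewrite /Tm; ring.
by rewrite big_split /= -big_distrr alt_sum mulrC.
Qed.

Lemma sum_from k (F : nat -> R) : (k <= n.+1)%N -> (forall r, (r < k)%N -> F r = 0) ->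
  \sum_(r < n.+1) F r = \sum_(k <= r < n.+1) F r.
Proof.
move=> kn h; rewrite -(big_mkord xpredT) (@big_cat_nat _ _ _ k) //=.
by rewrite big_nat big1 ?add0r // => r /andP[_ /h].
Qed.
End Main.

Theorem mainTheorem7 (R : realFieldType) (n : nat) (p : R) :
  (1 <= n)%N -> 0 <= p -> p <= 1 ->
  (* (i) *)
  (forall k : nat, (1 < k)%N -> (k < n)%N ->
     Prp p (PCE n k) =
       \sum_(k <= r < n.+1)
          ('C(r, k))%:R * (-1) ^+ (r - k) * ('C(n, r))%:R * 2 ^+ r *
          (p ^+ (2 ^ n - 2 ^ (n - r)) - p ^+ (2 ^ n))
     /\
     Prp p (NCE n k) =
       \sum_(k <= r < n.+1)
          ('C(r, k))%:R * (-1) ^+ (r - k) * ('C(n, r))%:R * 2 ^+ r *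
          ((1 - p) ^+ (2 ^ n - 2 ^ (n - r)) - (1 - p) ^+ (2 ^ n)))
  /\
  (* (ii) *)
  ((1 < n)%N ->
     Prp p (PCE n n) =
       2 ^+ n * (p ^+ (2 ^ n - 1) - p ^+ (2 ^ n)) + p ^+ (2 ^ n)
     /\
     Prp p (NCE n n) =
       2 ^+ n * ((1 - p) ^+ (2 ^ n - 1) - (1 - p) ^+ (2 ^ n)) + (1 - p) ^+ (2 ^ n))
  /\
  (* (iii) *)
  ((1 < n)%N ->
     Prp p (PCE n 1) =
       2 * n%:R * (p ^+ (2 ^ n.-1) - p ^+ (2 ^ n)
                   - p ^+ (2 ^ n.-1) * (1 - p) ^+ (2 ^ n.-1))
       + \sum_(2 <= r < n.+1)
           r%:R * (-1) ^+ (r - 1) * ('C(n, r))%:R * 2 ^+ r *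
           (p ^+ (2 ^ n - 2 ^ (n - r)) - p ^+ (2 ^ n))
     /\
     Prp p (NCE n 1) =
       2 * n%:R * ((1 - p) ^+ (2 ^ n.-1) - (1 - p) ^+ (2 ^ n)
                   - p ^+ (2 ^ n.-1) * (1 - p) ^+ (2 ^ n.-1))
       + \sum_(2 <= r < n.+1)
           r%:R * (-1) ^+ (r - 1) * ('C(n, r))%:R * 2 ^+ r *
           ((1 - p) ^+ (2 ^ n - 2 ^ (n - r)) - (1 - p) ^+ (2 ^ n))).
Proof.
move=> n1 _ _.
have gen1 : forall q : R, forall k, (1 < k)%N -> (k < n)%N ->
    Prp q (PCE n k) = \sum_(k <= r < n.+1) @Tm R n q k r.
  move=> q k k1 kn; rewrite CL; last by apply: ltn_trans k1.
  rewrite (gtn_eqF kn) (gtn_eqF k1) !mul0r subr0 addr0.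
  rewrite (@sum_from R n k); last by move=> r rk; rewrite /Tm bin_small // !mul0r.
    by [].
  by apply: leq_trans (ltnW kn) _.
have gen2 : forall q : R, (1 < n)%N ->
    Prp q (PCE n n) = 2 ^+ n * (q ^+ (2 ^ n - 1) - q ^+ (2 ^ n)) + q ^+ (2 ^ n).
  move=> q n2; rewrite CL; last by apply: ltnW.
  rewrite eqxx (gtn_eqF n2) mul0r subr0 mul1r.
  rewrite (@sum_from R n n) //; last by move=> r rk; rewrite /Tm bin_small // !mul0r.
  by rewrite big_nat1 /Tm binn subnn expn0 expr0 !mulr1 mul1r.
have e21 : (2 ^ n - 2 ^ (n - 1) = 2 ^ n.-1)%N.
  by clear -n1; case: n n1 => // m _; rewrite subn1 /= expnS mul2n -addnn addnK.
have gen3 : forall q : R, (1 < n)%N ->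
    Prp q (PCE n 1) =
       2 * n%:R * (q ^+ (2 ^ n.-1) - q ^+ (2 ^ n)
                   - q ^+ (2 ^ n.-1) * (1 - q) ^+ (2 ^ n.-1))
       + \sum_(2 <= r < n.+1)
           r%:R * (-1) ^+ (r - 1) * ('C(n, r))%:R * 2 ^+ r *
           (q ^+ (2 ^ n - 2 ^ (n - r)) - q ^+ (2 ^ n)).
  move=> q n2; rewrite CL // eqxx (gtn_eqF n2) mul0r addr0 mul1r.
  rewrite -(big_mkord xpredT) big_ltn // big_ltn //.
  rewrite {1}/Tm bin0n /= !mul0r add0r.
  rewrite {1}/Tm binn bin1 subnn expr0 e21 mulr1 mul1r.
  rewrite (eq_big_nat _ _ (F2 := fun r => r%:R * (-1) ^+ (r - 1) * ('C(n, r))%:R * 2 ^+ r *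
           (q ^+ (2 ^ n - 2 ^ (n - r)) - q ^+ (2 ^ n)))); last by move=> r _; rewrite /Tm bin1.
  rewrite -muln2 natrM; ring.
have s1 : 1 - (1 - p) = p by ring.
split.
  move=> k k1 kn; split; first exact: gen1.
  by rewrite nce_pce gen1.
split.
  move=> n2; split; first exact: gen2.
  by rewrite nce_pce gen2.
move=> n2; split; first exact: gen3.
by rewrite nce_pce gen3 // s1 [p ^+ _ * _]mulrC.
Qed.
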